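(* Let $G$ be a finite group of order $n$ with $n\not\equiv 1 \pmod 3$. Then the number of transversals of the Cayley table of $G$ is divisible by $3$.
   Context: The Cayley table of a finite group $G$ is the latin square with rows and columns indexed by the elements of $G$ whose entry in row $x$, column $y$ is $xy$. A transversal of a latin square of order $n$ is a set of $n$ cells, one from each row and one from each column, no two containing the same symbol. *)

(* Defs.v *)
From mathcomp Require Import all_boot all_fingroup.
Set Implicit Arguments. Unset Strict Implicit. Unset Printing Implicit Defensive.
Local Open Scope group_scope.

(* The Cayley table of the finite group gT: cell (x, y) contains x * y.
   A cell is a pair (row, column) : gT * gT. *)
Definition cayley_symbol (gT : finGroupType) (c : gT * gT) : gT := c.1 * c.2.

Definition is_cayley_transversal (gT : finGroupType) (T : {set gT * gT}) : bool :=
  [&& #|T| == #|gT|,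
      [forall x : gT, #|[set c in T | c.1 == x]| == 1%N],
      [forall y : gT, #|[set c in T | c.2 == y]| == 1%N] &
      [forall c in T, forall d in T,
         (cayley_symbol c == cayley_symbol d) ==> (c == d)]].

Definition num_cayley_transversals (gT : finGroupType) : nat :=
  #|[set T : {set gT * gT} | is_cayley_transversal T]|.

(* Main.v *)
Require Import Defs.
From mathcomp Require Import all_boot all_fingroup all_solvable.
Set Implicit Arguments. Unset Strict Implicit. Unset Printing Implicit Defensive.
Lemma orbit3 (T : finType) (f : T -> T) (A : {set T}) :
  (forall x, f (f (f x)) = x) -> (forall x, x \in A -> f x \in A) ->
  (forall x, x \in A -> f x != x) -> 3 %| #|A|.
Proof.
move=> f3; suff: forall m (A : {set T}), #|A| <= m -> (forall x, x \in A -> f x \in A) ->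
  (forall x, x \in A -> f x != x) -> 3 %| #|A| by apply.
elim=> [|m IH] {}A Hk stA fxA.
  by move: Hk; rewrite leqn0 => /eqP ->.
case: (set_0Vmem A) => [->|[x xA]]; first by rewrite cards0.
have fx := fxA _ xA.
have ffx : f (f x) != x.
  by apply: contra fx => /eqP e; rewrite -{1}e f3.
have ffx2 : f (f x) != f x.
  by apply: contra fx => /eqP e; rewrite -{2}(f3 x) e e.
set B := ((A :\ x) :\ f x) :\ f (f x).
have cA : #|A| = #|B| + 3.
  rewrite (cardsD1 x A) xA (cardsD1 (f x) (A :\ x)).
  idtac.
  rewrite (cardsD1 (f (f x)) _) !inE ffx ffx2 !stA //.
  rewrite /B.
  by rewrite fx /= !add1n addn3.
have inB y : (y \in B) = [&& y != f (f x), y != f x, y != x & y \in A].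
  by rewrite !inE.
rewrite cA dvdn_addl //; apply: IH.
- by move: Hk; rewrite cA addn3 ltnS => /ltnW/ltnW.
- move=> y; rewrite !inB => /and4P [h1 h2 h3 yA]; rewrite stA // andbT.
  apply/and3P; split.
  + by apply: contra h2 => /eqP e; rewrite -(f3 y) e f3.
  + by apply: contra h3 => /eqP e; rewrite -(f3 y) e f3.
  + by apply: contra h1 => /eqP e; rewrite -(f3 y) e.
- by move=> y; rewrite inB => /and4P [_ _ _ /fxA].
Qed.

Local Open Scope group_scope.

Lemma card1_eq (T : finType) (A : {set T}) x y :
  #|A| == 1%N -> x \in A -> y \in A -> x = y.
Proof. by move=> /cards1P [z ->]; rewrite !inE => /eqP-> /eqP->. Qed.

Lemma inj_card1 (gT : finGroupType) (T : {set gT * gT}) (k : gT * gT -> gT) :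
  #|T| = #|gT| -> {in T &, injective k} ->
  forall z, #|[set c in T | k c == z]| == 1%N.
Proof.
move=> cT ik z.
have hT : k @: T = setT.
  apply/eqP; rewrite eqEcard subsetT cardsT (card_in_imset ik) cT /=; exact: leqnn.
have : z \in k @: T by rewrite hT inE.
case/imsetP => c cT' ->.
apply/cards1P; exists c; apply/setP => d; rewrite !inE.
apply/andP/eqP => [[dT /eqP e]|->]; [by apply: ik | by rewrite cT' eqxx].
Qed.

Lemma transP (gT : finGroupType) (T : {set gT * gT}) :
  is_cayley_transversal T <->
  [/\ #|T| = #|gT|, {in T &, injective fst}, {in T &, injective snd}
    & {in T &, injective (@cayley_symbol gT)}].
Proof.
split.
- case/and4P => /eqP cT /forallP r /forallP c /forall_inP s; split => //.
  + move=> a b aT bT e; apply: (card1_eq (r a.1)).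
      by rewrite inE aT eqxx.
    by rewrite inE bT -e eqxx.
  + move=> a b aT bT e; apply: (card1_eq (c a.2)).
      by rewrite inE aT eqxx.
    by rewrite inE bT -e eqxx.
  + move=> a b aT bT e; move: (s a aT) => /forall_inP /(_ b bT) /implyP.
    by rewrite e eqxx => /(_ isT) /eqP.
- case=> cT i1 i2 i3; apply/and4P; split.
  + by rewrite cT.
  + by apply/forallP => x; exact: (inj_card1 cT i1).
  + by apply/forallP => x; exact: (inj_card1 cT i2).
  + apply/forall_inP => a aT; apply/forall_inP => b bT; apply/implyP => /eqP e.
    by apply/eqP; exact: i3.
Qed.

Lemma inj_imset (aT : finType) (rT : Type) (h : aT -> aT) (k : aT -> rT)
  (T : {set aT}) : {in T &, injective (k \o h)} -> {in h @: T &, injective k}.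
Proof.
by move=> ik _ _ /imsetP[a aT1 ->] /imsetP[b bT1 ->] e; rewrite (ik a b aT1 bT1 e).
Qed.

Lemma card_pos (gT : finGroupType) : 0 < #|gT|.
Proof. by rewrite -cardsT (cardG_gt0 [set: gT]%G). Qed.

Local Close Scope group_scope.

Theorem theorem4p7 (gT : finGroupType) :
  #|gT| %% 3 != 1 -> 3 %| num_cayley_transversals gT.
Proof.
Local Open Scope group_scope.
move=> hn; rewrite /num_cayley_transversals.
set X := [set T : {set gT * gT} | is_cayley_transversal T].
case: (boolP (3 %| #|gT|)) => h3.
- have h3' : 3 %| #|[set: gT]%G| by rewrite cardsT.
  have [g _ og] := @Cauchy _ 3 _ isT h3'.
  pose h := fun c : gT * gT => (g * c.1, c.2).
  have g3 x : g * (g * (g * x)) = x.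
    have e : g ^+ 3 = 1 by rewrite -og expg_order.
    by rewrite mulgA mulgA -expg2 -expgSr e mul1g.
  have hh c : h (h (h c)) = c by case: c => a b; rewrite /h /= g3.
  have hinj : injective h := can_inj (g := fun c => h (h c)) hh.
  apply: (@orbit3 _ (fun T : {set gT * gT} => h @: T) X).
  + move=> T /=; rewrite -!imset_comp -[RHS]imset_id; apply: eq_imset => c /=.
    exact: hh.
  + move=> T; rewrite !inE => /transP [cT i1 i2 i3]; apply/transP; split.
    * by rewrite card_imset.
    * by apply: inj_imset => a b aT bT /= /(mulgI g) e; exact: i1.
    * by apply: inj_imset => a b aT bT /= e; exact: i2.
    * apply: inj_imset => a b aT bT; rewrite /comp /cayley_symbol /= -!mulgA.
      by move=> /(mulgI g) e; exact: i3.
  + move=> T; rewrite inE => /transP [cT i1 i2 i3]; apply/eqP => FT.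
    case: (set_0Vmem T) => [T0|[c cT']].
      by move: (card_pos gT); rewrite -cT T0 cards0.
    have hc : h c \in T by rewrite -FT; apply: imset_f.
    have := i2 _ _ hc cT' erefl; case: c {cT' hc} => a b /= [] e.
    have g1 : g = 1 by apply: (mulIg a); rewrite mul1g.
    by move: og; rewrite g1 order1.
- pose r := fun c : gT * gT => (c.2, (c.1 * c.2)^-1).
  have e1 (a b : gT) : (b * (a * b)^-1)^-1 = a by rewrite invMg invgK mulgK.
  have e2 (a b : gT) : ((a * b)^-1 * a)^-1 = b by rewrite invMg invgK mulKg.
  have e3 (a b : gT) : b * (a * b)^-1 = a^-1 by rewrite invMg mulKVg.
  have rr c : r (r (r c)) = c by case: c => a b; rewrite /r /= e1 e2.
  have rinj : injective r := can_inj (g := fun c => r (r c)) rr.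
  apply: (@orbit3 _ (fun T : {set gT * gT} => r @: T) X).
  + move=> T /=; rewrite -!imset_comp -[RHS]imset_id; apply: eq_imset => c /=.
    exact: rr.
  + move=> T; rewrite !inE => /transP [cT i1 i2 i3]; apply/transP; split.
    * by rewrite card_imset.
    * by apply: inj_imset => a b aT bT /= e; exact: i2.
    * by apply: inj_imset => a b aT bT /= /invg_inj e; exact: i3.
    * apply: inj_imset => a b aT bT; rewrite /comp /cayley_symbol /= !e3.
      by move=> /invg_inj e; exact: i1.
  + move=> T; rewrite inE => /transP [cT i1 i2 i3]; apply/eqP => FT.
    have H : 3 %| #|T :\ (1, 1)|.
      apply: (@orbit3 _ r).
      * exact: rr.
      * move=> c; rewrite !inE => /andP [ne cT']; apply/andP; split.
          apply: contra ne; case: c {cT'} => a b; rewrite /r /=.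
          case/eqP => -> e; rewrite mulg1 in e.
          by rewrite -[a]invgK e invg1.
        by rewrite -FT; apply: imset_f.
      * case=> a b; rewrite !inE => /andP [ne _]; apply: contra ne.
        rewrite /r /= => /eqP [eb e]; subst b.
        have a3 : a ^+ 3 == 1.
          by rewrite !expgS expg0 mulg1 -{1}e mulVg.
        have o1 : #[a] %| 1%N.
          have : coprime 3 #|gT| by rewrite prime_coprime.
          rewrite /coprime => /eqP <-; rewrite dvdn_gcd order_dvdn a3 /=.
          by rewrite -cardsT (order_dvdG (G := [set: gT]%G)) ?inE.
        move: o1; rewrite dvdn1 order_eq1 => /eqP ->; by [].
    move: hn h3; rewrite /dvdn -cT (cardsD1 (1, 1) T).
    case/dvdnP: H => k ->; rewrite addnC modnMDl.
    by case: (_ \in T).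
Qed.
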